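(* Let $\mathcal{F}=\langle\mathbb{A},(\mu_i)_{i\in\mathsf{Ag}}\rangle$ be an APE-structure and $\mathbb{E}=(E,(\sim_i),(P_i),\Phi,\mathsf{pre})$ a probabilistic event structure over $\mathbb{A}$. Then the updated structure $\mathcal{F}^{\mathbb{E}}=(\mathbb{A}^{\mathbb{E}},(\mu^{\mathbb{E}}_i)_{i\in\mathsf{Ag}})$ is an APE-structure.
   Context: Fix a set $\mathsf{Ag}$ of agents. A monadic Heyting algebra is a Heyting algebra $\mathbb{L}$ with, for each $i\in\mathsf{Ag}$, monotone unary operations $\lozenge_i,\Box_i$ such that for all $a,b$: $a\leq\lozenge_i a$; $\Box_i a\leq a$; $\lozenge_i(a\vee b)\leq\lozenge_i a\vee\lozenge_i b$; $\Box_i(a\to b)\leq\Box_i a\to\Box_i b$; $\lozenge_i a\leq\Box_i\lozenge_i a$; $\lozenge_i\Box_i a\leq\Box_i a$; $\Box_i(a\to b)\leq\lozenge_i a\to\lozenge_i b$; $\lozenge_i\bot\leq\bot$; $\top\leq\Box_i\top$. An epistemic Heyting algebra is a finite monadic Heyting algebra with $\lozenge_i a\vee\neg\lozenge_i a=\top$ for all $i,a$. An element $c$ is $i$-minimal if $c\neq\bot$, $\lozenge_i c=c$, and whenever $d<c$ and $\lozenge_i d=d$ then $d=\bot$; $\mathsf{Min}_i(\cdot)$ is the set of $i$-minimal elements. A partial map $\mu:\mathbb{A}\to\mathbb{R}^+$ is an $i$-premeasure if: $\mathsf{dom}(\mu)=\mathsf{Min}_i(\mathbb{A}){\downarrow}$;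 $\mu$ is order-preserving; for $a\in\mathsf{Min}_i(\mathbb{A})$ and $b,c\leq a$, $\mu(b\vee c)=\mu(b)+\mu(c)-\mu(b\wedge c)$; $\mu(\bot)=0$ if $\mathsf{dom}(\mu)\neq\varnothing$. It is an $i$-measure if also: for $a\in\mathsf{Min}_i(\mathbb{A})$ and $b<c\leq a$, $\mu(b)<\mu(c)$; and $\mu(a)=1$ for $a\in\mathsf{Min}_i(\mathbb{A})$. An APE-structure is $\langle\mathbb{A},(\mu_i)\rangle$ with $\mathbb{A}$ an epistemic Heyting algebra and each $\mu_i$ an $i$-measure on $\mathbb{A}$. A pre-ordered multiset on $X$ is a multiset in which the copies $x_1,\dots,x_n$ of an element carry the linear order $x_1\prec\cdots\prec x_n$. A probabilistic event structure over $\mathbb{A}$ is $(E,(\sim_i),(P_i),\Phi,\mathsf{pre})$: $E$ non-empty finite; $\sim_i$ equivalence relations on $E$; $P_i:E\to\,]0,1]$ with $\sum\{P_i(e')\mid e'\sim_i e\}=1$; $\Phi$ a finite pre-ordered multiset on $\mathbb{A}$ such that any $a,b\in\Phi$ arising from distinct elements satisfy $a\wedge b=\bot$ or $a<b$ or $b<a$; $\mathsf{pre}(\bullet\mid a)$ a probability distribution on $E$ for each $a\in\Phi$; and if $\mathsf{pre}(e\mid a)=0$ then $\mathsf{pre}(e\mid b)=0$ for $b\in\Phi$ with $a<b$ (distinct elements) or $a\prec b$ (copies). For $a\in\Phi$: $\mathrm{mb}(a)$ is the set of maximal elements of $\Phi\cap({\downarrow}a\setminus\{a\})$, and $\mu^a_i(x):=\mu_i(x\wedge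 a)-\sum_{b\in\mathrm{mb}(a)}\mu_i(x\wedge b)$ for $x\in\mathsf{Min}_i(\mathbb{A}){\downarrow}$. Intermediate algebra $\mathbb{A}'=\prod_{\mathbb{E}}\mathbb{A}$: all maps $f:E\to\mathbb{A}$ with pointwise Heyting operations, $(\lozenge'_i f)(e)=\bigvee\{\lozenge_i f(e')\mid e'\sim_i e\}$, $(\Box'_i f)(e)=\bigwedge\{\Box_i f(e')\mid e'\sim_i e\}$; and $\mu'_i:\mathsf{Min}_i(\mathbb{A}'){\downarrow}\to\mathbb{R}^+$, $\mu'_i(f)=\sum_{e\in E}\sum_{a\in\Phi}P_i(e)\mu^a_i(f(e))\mathsf{pre}(e\mid a)$. Define $\overline{\mathsf{pre}}\in\mathbb{A}'$ by $\overline{\mathsf{pre}}(e)=\bigvee\{a\in\Phi\mid\mathsf{pre}(e\mid a)\neq0\}$. For an epistemic Heyting algebra $\mathbb{B}$ and $c\in\mathbb{B}$, the pseudo-quotient $\mathbb{B}^c$ has carrier the quotient Heyting algebra by $x\cong_c y\iff x\wedge c=y\wedge c$ (classes $[x]$, $[x]\leq[y]$ iff $x\wedge c\leq y\wedge c$), with $\lozenge^c_i[x]=[\lozenge_i(x\wedge c)]$ and $\Box^c_i[x]=[\Box_i(c\to x)]$. Set $\mathbb{A}^{\mathbb{E}}:=(\mathbb{A}')^{\overline{\mathsf{pre}}}$. The updated structure is $\mathcal{F}^{\mathbb{E}}=(\mathbb{A}^{\mathbb{E}},(\mu^{\mathbb{E}}_i))$ with $\mu^{\mathbb{E}}_i:\mathsf{Min}_i(\mathbb{A}^{\mathbb{E}}){\downarrow}\to[0,1]$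 given by $\mu^{\mathbb{E}}_i([g])=0$ if $[g]=\bot$ and otherwise $\mu^{\mathbb{E}}_i([g])=\mu'_i(g)/\mu'_i(f)$, where $[f]$ is the only element of $\mathsf{Min}_i(\mathbb{A}^{\mathbb{E}})$ with $[g]\leq[f]$. *)

(* Defs.v *)
From HB Require Import structures.
From mathcomp Require Import all_boot all_order all_algebra.
From mathcomp Require Import reals.
Set Implicit Arguments.
Unset Strict Implicit.
Unset Printing Implicit Defensive.
Import Order.TTheory GRing.Theory Num.Theory.
Local Open Scope ring_scope.

Section Algebras.
Variable Ag : Type.

Record hops (T : Type) := HOps {
  hmeet : T -> T -> T;
  hjoin : T -> T -> T;
  himp  : T -> T -> T;
  hbot  : T;
  htop  : T;
  hdia  : Ag -> T -> T;
  hbox  : Ag -> T -> T }.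

Section Ops.
Variables (T : eqType) (o : hops T).

Definition hle (x y : T) : bool := hmeet o x y == x.
Definition hlt (x y : T) : bool := hle x y && (x != y).
Definition hneg (x : T) : T := himp o x (hbot o).

Definition is_heyting : Prop :=
  associative (hmeet o) /\ commutative (hmeet o) /\
  associative (hjoin o) /\ commutative (hjoin o) /\
  (forall x y, hmeet o x (hjoin o x y) = x) /\
  (forall x y, hjoin o x (hmeet o x y) = x) /\
  (forall x, hmeet o x (htop o) = x) /\
  (forall x, hjoin o x (hbot o) = x) /\
  (forall x y z, hle (hmeet o x y) z = hle x (himp o y z)).

Definition monadic_ax (i : Ag) : Prop :=
  (forall a b, hle a b -> hle (hdia o i a) (hdia o i b)) /\
  (forall a b, hle a b -> hle (hbox o i a) (hbox o i b)) /\
  (forall a, hle a (hdia o i a)) /\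
  (forall a, hle (hbox o i a) a) /\
  (forall a b, hle (hdia o i (hjoin o a b)) (hjoin o (hdia o i a) (hdia o i b))) /\
  (forall a b, hle (hbox o i (himp o a b)) (himp o (hbox o i a) (hbox o i b))) /\
  (forall a, hle (hdia o i a) (hbox o i (hdia o i a))) /\
  (forall a, hle (hdia o i (hbox o i a)) (hbox o i a)) /\
  (forall a b, hle (hbox o i (himp o a b)) (himp o (hdia o i a) (hdia o i b))) /\
  hle (hdia o i (hbot o)) (hbot o) /\
  hle (htop o) (hbox o i (htop o)).

Definition is_monadic : Prop := is_heyting /\ forall i, monadic_ax i.
End Ops.

Section Finite.
Variables (T : finType) (o : hops T).

Definition is_epistemic : Prop :=
  is_monadic o /\ forall i a, hjoin o (hdia o i a) (hneg o (hdia o i a)) = htop o.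

Definition is_minimal (i : Ag) (c : T) : bool :=
  [&& c != hbot o, hdia o i c == c &
      [forall d, (hlt o d c && (hdia o i d == d)) ==> (d == hbot o)]].

Definition in_dom (i : Ag) (x : T) : bool :=
  [exists a, is_minimal i a && hle o x a].

Variable R : realType.

(* A partial map with domain Min_i(A)↓ is represented by a total function
   T -> R whose values outside Min_i(A)↓ are irrelevant. *)
Definition is_premeasure (i : Ag) (mu : T -> R) : Prop :=
  (forall x, in_dom i x -> 0 <= mu x) /\
  (forall x y, in_dom i x -> in_dom i y -> hle o x y -> mu x <= mu y) /\
  (forall a b c, is_minimal i a -> hle o b a -> hle o c a ->
     mu (hjoin o b c) = mu b + mu c - mu (hmeet o b c)) /\
  ((exists x, in_dom i x) -> mu (hbot o) = 0).

Definition is_measure (i : Ag) (mu : T -> R) : Prop :=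
  is_premeasure i mu /\
  (forall a b c, is_minimal i a -> hlt o b c -> hle o c a -> mu b < mu c) /\
  (forall a, is_minimal i a -> mu a = 1).

Definition is_APE (mu : Ag -> T -> R) : Prop :=
  is_epistemic /\ forall i, is_measure i (mu i).
End Finite.

(** Pseudo-quotient B^c.  The quotient B/≅_c is represented by the set of
    canonical representatives x /\ c (the image of x |-> x /\ c);
    [x] is  qproj x := x /\ c. *)
Section Quot.
Variables (T : finType) (o : hops T) (c : T).

Definition qrep : pred T := fun y => y \in codom (fun x => hmeet o x c).
Definition qtype := {y : T | qrep y}.
Definition qproj (x : T) : qtype := exist qrep (hmeet o x c) (codom_f _ x).

Definition qops : hops qtype := HOps
  (fun p q => qproj (hmeet o (val p) (val q)))
  (fun p q => qproj (hjoin o (val p) (val q)))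
  (fun p q => qproj (himp o (val p) (val q)))
  (qproj (hbot o))
  (qproj (htop o))
  (fun i p => qproj (hdia o i (hmeet o (val p) c)))
  (fun i p => qproj (hbox o i (himp o c (val p)))).

Variable R : realType.
Definition qmu (mu' : Ag -> T -> R) (i : Ag) (p : qtype) : R :=
  if p == qproj (hbot o) then 0 else
  if [pick f | is_minimal qops i f && hle qops p f] is Some f
  then mu' i (val p) / mu' i (val f) else 0.
End Quot.

Section Event.
Variables (R : realType) (A : finType) (o : hops A) (E : finType)
  (sim : Ag -> rel E) (P : Ag -> E -> R) (phi : seq A)
  (pre : 'I_(size phi) -> E -> R).

(* Phi is a pre-ordered multiset given by the sequence phi: its members are
   the positions a : 'I_(size phi), labelled by lab a; copies of the same
   element are linearly ordered by position. *)
Definition lab (a : 'I_(size phi)) : A := nth (hbot o) phi a.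

Definition phi_lt (a b : 'I_(size phi)) : bool :=
  ((lab a != lab b) && hlt o (lab a) (lab b)) ||
  ((lab a == lab b) && (val a < val b)%N).

Definition is_pes : Prop :=
  (0 < #|E|)%N /\
  (forall i, (forall e, sim i e e) /\ (forall e e', sim i e e' -> sim i e' e) /\
             (forall e1 e2 e3, sim i e1 e2 -> sim i e2 e3 -> sim i e1 e3)) /\
  (forall i e, 0 < P i e <= 1) /\
  (forall i e, \sum_(e' | sim i e' e) P i e' = 1) /\
  (forall a b, lab a != lab b ->
     hmeet o (lab a) (lab b) = hbot o \/ hlt o (lab a) (lab b) \/ hlt o (lab b) (lab a)) /\
  (forall a e, 0 <= pre a e) /\
  (forall a, \sum_e pre a e = 1) /\
  (forall a b e, pre a e = 0 -> phi_lt a b -> pre b e = 0).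

Definition mb (a : 'I_(size phi)) : {set 'I_(size phi)} :=
  [set b | phi_lt b a & [forall c, ~~ (phi_lt b c && phi_lt c a)]].

Definition mu_at (mu : Ag -> A -> R) (i : Ag) (a : 'I_(size phi)) (x : A) : R :=
  mu i (hmeet o x (lab a)) - \sum_(b in mb a) mu i (hmeet o x (lab b)).

Definition pops : hops {ffun E -> A} := @HOps {ffun E -> A}
  (fun f g : {ffun E -> A} => [ffun e => hmeet o (f e) (g e)])
  (fun f g : {ffun E -> A} => [ffun e => hjoin o (f e) (g e)])
  (fun f g : {ffun E -> A} => [ffun e => himp o (f e) (g e)])
  [ffun _ => hbot o]
  [ffun _ => htop o]
  (fun i (f : {ffun E -> A}) => [ffun e => \big[hjoin o/hbot o]_(e' | sim i e' e) hdia o i (f e')])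
  (fun i (f : {ffun E -> A}) => [ffun e => \big[hmeet o/htop o]_(e' | sim i e' e) hbox o i (f e')]).

Definition pmu (mu : Ag -> A -> R) (i : Ag) (f : {ffun E -> A}) : R :=
  \sum_(e : E) \sum_(a < size phi) P i e * mu_at mu i a (f e) * pre a e.

Definition prebar : {ffun E -> A} :=
  [ffun e => \big[hjoin o/hbot o]_(a < size phi | pre a e != 0) lab a].

Definition upd_ops := qops pops prebar.
Definition upd_mu (mu : Ag -> A -> R) := @qmu _ pops prebar R (pmu mu).
End Event.
End Algebras.

(* Main.v *)
Require Import Defs.
From HB Require Import structures.
From mathcomp Require Import all_boot all_order all_algebra.
From mathcomp Require Import reals.
From mathcomp Require Import lra.
Set Implicit Arguments.
Unset Strict Implicit.
Unset Printing Implicit Defensive.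

Section HA.
Variables (Ag : Type) (T : eqType) (o : hops Ag T).
Hypothesis Hh : is_heyting o.

Local Notation "x ⊓ y" := (hmeet o x y) (at level 40, left associativity).
Local Notation "x ⊔ y" := (hjoin o x y) (at level 45, left associativity).
Local Notation "x ≤ y" := (hle o x y) (at level 70).

Lemma hmeetA : associative (hmeet o). Proof. by case: Hh. Qed.
Lemma hmeetC : commutative (hmeet o). Proof. by case: Hh => _ []. Qed.
Lemma hjoinA : associative (hjoin o). Proof. by case: Hh => _ [] _ []. Qed.
Lemma hjoinC : commutative (hjoin o). Proof. by case: Hh => _ [] _ [] _ []. Qed.
Lemma hmeetJ x y : x ⊓ (x ⊔ y) = x. Proof. by case: Hh => _ [] _ [] _ [] _ []. Qed.
Lemma hjoinM x y : x ⊔ (x ⊓ y) = x. Proof. by case: Hh => _ [] _ [] _ [] _ [] _ []. Qed.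
Lemma hmeet1 x : x ⊓ htop o = x. Proof. by case: Hh => _ [] _ [] _ [] _ [] _ [] _ []. Qed.
Lemma hjoin0 x : x ⊔ hbot o = x. Proof. by case: Hh => _ [] _ [] _ [] _ [] _ [] _ [] _ []. Qed.
Lemma hresid x y z : (x ⊓ y ≤ z) = (x ≤ himp o y z).
Proof. by case: Hh => _ [] _ [] _ [] _ [] _ [] _ [] _ []. Qed.

Lemma hmeetxx x : x ⊓ x = x.
Proof. by have := hmeetJ x (x ⊓ x); rewrite hjoinM. Qed.
Lemma hjoinxx x : x ⊔ x = x.
Proof. by have := hjoinM x (x ⊔ x); rewrite hmeetJ. Qed.

Lemma hleE x y : (x ≤ y) = (x ⊓ y == x). Proof. by []. Qed.
Lemma hleP x y : reflect (x ⊓ y = x) (x ≤ y). Proof. exact: eqP. Qed.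

Lemma hle_joinE x y : (x ≤ y) = (x ⊔ y == y).
Proof.
apply/idP/idP => [/hleP H|/eqP H]; apply/eqP.
  by rewrite -H hjoinC hmeetC hjoinM.
by rewrite -H hmeetJ.
Qed.

Lemma hle_refl x : x ≤ x. Proof. by apply/hleP; rewrite hmeetxx. Qed.
Lemma hle_trans y x z : x ≤ y -> y ≤ z -> x ≤ z.
Proof. by move=> /hleP H1 /hleP H2; apply/hleP; rewrite -H1 -hmeetA H2. Qed.
Lemma hle_anti x y : x ≤ y -> y ≤ x -> x = y.
Proof. by move=> /hleP H1 /hleP H2; rewrite -H1 -{2}H2 hmeetC. Qed.
Lemma hmeet_l x y : x ⊓ y ≤ x.
Proof. by apply/hleP; rewrite (hmeetC x y) -hmeetA hmeetxx hmeetC. Qed.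
Lemma hmeet_r x y : x ⊓ y ≤ y.
Proof. by apply/hleP; rewrite -hmeetA hmeetxx. Qed.
Lemma hle_meetI z x y : z ≤ x -> z ≤ y -> z ≤ x ⊓ y.
Proof. by move=> /hleP H1 /hleP H2; apply/hleP; rewrite hmeetA H1 H2. Qed.
Lemma hle_meet z x y : (z ≤ x ⊓ y) = (z ≤ x) && (z ≤ y).
Proof.
apply/idP/andP => [H|[]]; last exact: hle_meetI.
by split; apply: hle_trans H _; [apply: hmeet_l | apply: hmeet_r].
Qed.
Lemma hjoin_l x y : x ≤ x ⊔ y. Proof. by apply/hleP; rewrite hmeetJ. Qed.
Lemma hjoin_r x y : y ≤ x ⊔ y. Proof. by rewrite hjoinC; apply: hjoin_l. Qed.
Lemma hle_joinI z x y : x ≤ z -> y ≤ z -> x ⊔ y ≤ z.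
Proof.
rewrite !hle_joinE => /eqP H1 /eqP H2; apply/eqP.
by rewrite -hjoinA H2 H1.
Qed.
Lemma hle_join z x y : (x ⊔ y ≤ z) = (x ≤ z) && (y ≤ z).
Proof.
apply/idP/andP => [H|[]]; last exact: hle_joinI.
by split; apply: hle_trans H; [apply: hjoin_l | apply: hjoin_r].
Qed.
Lemma hbot_le x : hbot o ≤ x.
Proof.
apply/hleP; have := hmeetJ (hbot o) x.
by rewrite hjoinC hjoin0.
Qed.
Lemma hle_top x : x ≤ htop o. Proof. by apply/hleP; rewrite hmeet1. Qed.
Lemma hle_bot x : x ≤ hbot o -> x = hbot o.
Proof. by move=> H; apply: hle_anti H (hbot_le _). Qed.

Lemma hmeet_leL x y z : x ≤ z -> x ⊓ y ≤ z.
Proof. by apply: hle_trans; apply: hmeet_l. Qed.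
Lemma hmeet_leR x y z : y ≤ z -> x ⊓ y ≤ z.
Proof. by apply: hle_trans; apply: hmeet_r. Qed.
Lemma hjoin_leL x y z : z ≤ x -> z ≤ x ⊔ y.
Proof. by move=> H; apply: hle_trans H _; apply: hjoin_l. Qed.
Lemma hjoin_leR x y z : z ≤ y -> z ≤ x ⊔ y.
Proof. by move=> H; apply: hle_trans H _; apply: hjoin_r. Qed.

Lemma hmeet_mono x x' y y' : x ≤ x' -> y ≤ y' -> x ⊓ y ≤ x' ⊓ y'.
Proof. by move=> H1 H2; apply: hle_meetI; [apply: hmeet_leL|apply: hmeet_leR]. Qed.
Lemma hjoin_mono x x' y y' : x ≤ x' -> y ≤ y' -> x ⊔ y ≤ x' ⊔ y'.
Proof. by move=> H1 H2; apply: hle_joinI; [apply: hjoin_leL|apply: hjoin_leR]. Qed.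

Lemma hle_imp x y z : (x ≤ himp o y z) = (x ⊓ y ≤ z). Proof. by rewrite hresid. Qed.
Lemma hmp x y : x ⊓ himp o x y ≤ y.
Proof. by rewrite hmeetC hresid hle_refl. Qed.
Lemma himp_mono x y y' : y ≤ y' -> himp o x y ≤ himp o x y'.
Proof. by move=> H; rewrite -hresid hmeetC; apply: hle_trans (hmp _ _) H. Qed.
Lemma himp_anti x x' y : x' ≤ x -> himp o x y ≤ himp o x' y.
Proof.
move=> H; rewrite -hresid hmeetC; apply: hle_trans (hmp x y).
by apply: hmeet_mono H (hle_refl _).
Qed.

Lemma hdistr x y z : x ⊓ (y ⊔ z) = (x ⊓ y) ⊔ (x ⊓ z).
Proof.
apply: hle_anti; last first.
  by apply: hle_joinI; apply: hmeet_mono (hle_refl _) _; [apply: hjoin_l|apply: hjoin_r].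
rewrite hmeetC hresid hle_join -!hresid !(hmeetC _ x).
by rewrite hjoin_l hjoin_r.
Qed.

Lemma heq_le x y : x = y -> x ≤ y. Proof. by move->; apply: hle_refl. Qed.

Lemma hmp2 a y z : a ≤ y -> a ≤ himp o y z -> a ≤ z.
Proof. by move=> H1 H2; apply: hle_trans (hmp y z); apply: hle_meetI. Qed.
Lemma hmeet_eql x y : x ≤ y -> x ⊓ y = x.
Proof. by move/eqP. Qed.

Lemma hbigJ_le I (r : seq I) (P : pred I) F z :
  (forall i, P i -> F i ≤ z) -> \big[hjoin o/hbot o]_(i <- r | P i) F i ≤ z.
Proof.
move=> H; apply: (big_ind (fun v => v ≤ z)) => //; first exact: hbot_le.
by move=> *; apply: hle_joinI.
Qed.
Lemma hle_bigJ (I : eqType) (r : seq I) (P : pred I) F i0 :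
  i0 \in r -> P i0 -> F i0 ≤ \big[hjoin o/hbot o]_(i <- r | P i) F i.
Proof.
elim: r => // j r IH; rewrite inE big_cons => /orP [/eqP ->|Hr] HP.
  by rewrite HP; apply: hjoin_l.
case: (P j); last exact: IH.
by apply: hjoin_leR; apply: IH.
Qed.
Lemma hle_bigJf (I : finType) (P : pred I) F i0 :
  P i0 -> F i0 ≤ \big[hjoin o/hbot o]_(i | P i) F i.
Proof. by apply: hle_bigJ; rewrite mem_index_enum. Qed.
Lemma hbigJ_le_seq (I : eqType) (r : seq I) F z :
  (forall i, i \in r -> F i ≤ z) -> \big[hjoin o/hbot o]_(i <- r) F i ≤ z.
Proof.
elim: r => [|j r IH] H; first by rewrite big_nil; apply: hbot_le.
rewrite big_cons; apply: hle_joinI; first by apply: H; rewrite inE eqxx.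
by apply: IH => k Hk; apply: H; rewrite inE Hk orbT.
Qed.
Lemma hmeet_bigJ (I : finType) (P : pred I) F z :
  z ⊓ \big[hjoin o/hbot o]_(i | P i) F i ≤ \big[hjoin o/hbot o]_(i | P i) (z ⊓ F i).
Proof.
rewrite hmeetC hresid; apply: hbigJ_le => j Pj; rewrite -hresid hmeetC.
exact: (hle_bigJf (fun k => z ⊓ F k) Pj).
Qed.
Lemma hle_bigM I (r : seq I) (P : pred I) F z :
  (forall i, P i -> z ≤ F i) -> z ≤ \big[hmeet o/htop o]_(i <- r | P i) F i.
Proof.
move=> H; apply: (big_ind (fun v => z ≤ v)) => //; first exact: hle_top.
by move=> *; apply: hle_meetI.
Qed.
Lemma hbigM_le (I : eqType) (r : seq I) (P : pred I) F i0 :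
  i0 \in r -> P i0 -> \big[hmeet o/htop o]_(i <- r | P i) F i ≤ F i0.
Proof.
elim: r => // j r IH; rewrite inE big_cons => /orP [/eqP ->|Hr] HP.
  by rewrite HP; apply: hmeet_l.
case: (P j); last exact: IH.
by apply: hmeet_leR; apply: IH.
Qed.
Lemma hbigM_lef (I : finType) (P : pred I) F i0 :
  P i0 -> \big[hmeet o/htop o]_(i | P i) F i ≤ F i0.
Proof. by apply: hbigM_le; rewrite mem_index_enum. Qed.

End HA.
Arguments hle_trans [Ag T o] Hh [y x z].

Section Mon.
Variables (Ag : Type) (T : eqType) (o : hops Ag T).
Hypothesis Hm : is_monadic o.
Let Hh : is_heyting o := Hm.1.

Local Notation "x ⊓ y" := (hmeet o x y) (at level 40, left associativity).
Local Notation "x ⊔ y" := (hjoin o x y) (at level 45, left associativity).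
Local Notation "x ≤ y" := (hle o x y) (at level 70).
Local Notation "◇" := (hdia o).
Local Notation "□" := (hbox o).

Lemma dia_mono i a b : a ≤ b -> ◇ i a ≤ ◇ i b. Proof. by have [H _] := Hm.2 i; apply: H. Qed.
Lemma box_mono i a b : a ≤ b -> □ i a ≤ □ i b. Proof. by have [_ [H _]] := Hm.2 i; apply: H. Qed.
Lemma le_dia i a : a ≤ ◇ i a. Proof. by have [_ [_ [H _]]] := Hm.2 i; apply: H. Qed.
Lemma box_le i a : □ i a ≤ a. Proof. by have [_ [_ [_ [H _]]]] := Hm.2 i; apply: H. Qed.
Lemma dia_join i a b : ◇ i (a ⊔ b) ≤ ◇ i a ⊔ ◇ i b.
Proof. by have [_ [_ [_ [_ [H _]]]]] := Hm.2 i; apply: H. Qed.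
Lemma box_imp i a b : □ i (himp o a b) ≤ himp o (□ i a) (□ i b).
Proof. by have [_ [_ [_ [_ [_ [H _]]]]]] := Hm.2 i; apply: H. Qed.
Lemma dia_box i a : ◇ i a ≤ □ i (◇ i a).
Proof. by have [_ [_ [_ [_ [_ [_ [H _]]]]]]] := Hm.2 i; apply: H. Qed.
Lemma diabox_le i a : ◇ i (□ i a) ≤ □ i a.
Proof. by have [_ [_ [_ [_ [_ [_ [_ [H _]]]]]]]] := Hm.2 i; apply: H. Qed.
Lemma box_imp_dia i a b : □ i (himp o a b) ≤ himp o (◇ i a) (◇ i b).
Proof. by have [_ [_ [_ [_ [_ [_ [_ [_ [H _]]]]]]]]] := Hm.2 i; apply: H. Qed.
Lemma dia_bot_le i : ◇ i (hbot o) ≤ hbot o.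
Proof. by have [_ [_ [_ [_ [_ [_ [_ [_ [_ [H _]]]]]]]]]] := Hm.2 i. Qed.
Lemma top_box i : htop o ≤ □ i (htop o).
Proof. by have [_ [_ [_ [_ [_ [_ [_ [_ [_ [_ H]]]]]]]]]] := Hm.2 i. Qed.

Lemma dia_bot i : ◇ i (hbot o) = hbot o.
Proof. exact: (hle_bot Hh) (dia_bot_le i). Qed.
Lemma box_top i : □ i (htop o) = htop o.
Proof. by apply: (hle_anti Hh) (hle_top Hh _) (top_box i). Qed.
Lemma diaK i a : ◇ i (◇ i a) = ◇ i a.
Proof.
apply: (hle_anti Hh) _ (le_dia _ _).
apply: (hle_trans Hh) _ (box_le i (◇ i a)).
apply: (hle_trans Hh) _ (diabox_le i (◇ i a)).
apply: dia_mono; exact: dia_box.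
Qed.
Lemma dia_joinE i a b : ◇ i (a ⊔ b) = ◇ i a ⊔ ◇ i b.
Proof.
apply: (hle_anti Hh) (dia_join _ _ _) _.
by apply: (hle_joinI Hh); apply: dia_mono; [apply: (hjoin_l Hh)|apply: (hjoin_r Hh)].
Qed.
Lemma dia_meet i a b : ◇ i (a ⊓ b) ≤ ◇ i a ⊓ ◇ i b.
Proof. by apply: (hle_meetI Hh); apply: dia_mono; [apply: (hmeet_l Hh)|apply: (hmeet_r Hh)]. Qed.
Lemma fixed_meet i u v : ◇ i u = u -> ◇ i v = v -> ◇ i (u ⊓ v) = u ⊓ v.
Proof.
move=> Hu Hv; apply: (hle_anti Hh) _ (le_dia _ _).
by rewrite -{2}Hu -{2}Hv; apply: dia_meet.
Qed.
Lemma fixed_join i u v : ◇ i u = u -> ◇ i v = v -> ◇ i (u ⊔ v) = u ⊔ v.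
Proof. by move=> Hu Hv; rewrite dia_joinE Hu Hv. Qed.
Lemma fixed_box i v : ◇ i v = v -> v ≤ □ i v.
Proof. by move=> Hv; rewrite -{1}Hv -{2}Hv; apply: dia_box. Qed.
Lemma fixed_neg i v : ◇ i v = v -> ◇ i (hneg o v) = hneg o v.
Proof.
move=> Hv; apply: (hle_anti Hh) _ (le_dia _ _).
rewrite /hneg (hle_imp Hh) (hmeetC Hh) -(hle_imp Hh) -{2}(dia_bot i).
apply: (hle_trans Hh) _ (box_imp_dia i (hneg o v) (hbot o)).
apply: (hle_trans Hh) (fixed_box Hv) _; apply: box_mono.
by rewrite (hle_imp Hh); apply: (hmp Hh).
Qed.
Lemma dia_bigJ i I (r : seq I) (P : pred I) F :
  ◇ i (\big[hjoin o/hbot o]_(j <- r | P j) F j) ≤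
  \big[hjoin o/hbot o]_(j <- r | P j) ◇ i (F j).
Proof.
elim: r => [|j r IH]; first by rewrite !big_nil dia_bot; apply: (hle_refl Hh).
rewrite !big_cons; case: (P j) => //.
by apply: (hle_trans Hh) (dia_join _ _ _) _; apply: (hjoin_mono Hh) (hle_refl Hh _) IH.
Qed.
Lemma fixed_bigJ i I (r : seq I) (P : pred I) F :
  (forall j, P j -> ◇ i (F j) = F j) ->
  ◇ i (\big[hjoin o/hbot o]_(j <- r | P j) F j) = \big[hjoin o/hbot o]_(j <- r | P j) F j.
Proof.
move=> H; elim: r => [|j r IH]; first by rewrite !big_nil dia_bot.
by rewrite !big_cons; case Pj: (P j) => //; apply: fixed_join => //; apply: H.
Qed.
End Mon.

Ltac hap L := match goal with
  | |- is_true (hle ?o _ _) => match goal with H : is_heyting o |- _ => apply: (@L _ _ o H) end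
  end.
Ltac lat_rec n :=
  match n with
  | O => fail
  | S ?m => first
     [ hap hle_refl | assumption | hap hbot_le | hap hle_top
     | (hap hle_meetI; [lat_rec n | lat_rec n])
     | (hap hle_joinI; [lat_rec n | lat_rec n])
     | (hap hmeet_leL; lat_rec m) | (hap hmeet_leR; lat_rec m)
     | (hap hjoin_leL; lat_rec m) | (hap hjoin_leR; lat_rec m) ]
  end.
Ltac lat := lat_rec 6.
Ltac latE := match goal with |- _ = _ => match goal with H : is_heyting ?o |- _ => apply: (@hle_anti _ _ o H); lat end end.



Section Epi.
Variables (Ag : Type) (T : finType) (o : hops Ag T).
Hypothesis Hm : is_monadic o.
Let Hh : is_heyting o := Hm.1.

Local Notation "x ⊓ y" := (hmeet o x y) (at level 40, left associativity).
Local Notation "x ⊔ y" := (hjoin o x y) (at level 45, left associativity).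
Local Notation "x ≤ y" := (hle o x y) (at level 70).
Local Notation "◇" := (hdia o).

Lemma minP i m : is_minimal o i m ->
  [/\ m != hbot o, ◇ i m = m &
   forall d, d ≤ m -> ◇ i d = d -> d != hbot o -> d = m].
Proof.
case/and3P => H1 /eqP H2 /forallP H3; split => // d Hdm Hd Hdb.
have := H3 d; rewrite /hlt Hdm Hd eqxx /= andbT.
case: eqP => // _ /=; by move/negPf: Hdb => ->.
Qed.

Lemma minI i m : m != hbot o -> ◇ i m = m ->
  (forall d, d ≤ m -> ◇ i d = d -> d != hbot o -> d = m) -> is_minimal o i m.
Proof.
move=> H1 H2 H3; apply/and3P; split => //; first by rewrite H2.
apply/forallP => d; apply/implyP => /andP [/andP [Hdm Hne] /eqP Hd].
by apply/negPn/negP => Hb; move: (H3 d Hdm Hd Hb) Hne => ->; rewrite eqxx.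
Qed.

Lemma min_le_dia i m x : is_minimal o i m -> m ⊓ x != hbot o -> m ≤ ◇ i x.
Proof.
case/minP => _ Hm1 Hm2 Hx.
have Hd : ◇ i (m ⊓ x) = m.
  apply: Hm2; first by rewrite -{2}Hm1; apply: (dia_mono Hm); apply: (hmeet_l Hh).
    exact: diaK.
  apply: contra Hx => /eqP Hb; apply/eqP; apply: (hle_bot Hh).
  by rewrite -Hb; apply: (le_dia Hm).
rewrite -Hd; apply: (dia_mono Hm); apply: (hmeet_r Hh).
Qed.

Lemma min_unique i F1 F2 p : is_minimal o i F1 -> is_minimal o i F2 ->
  p != hbot o -> p ≤ F1 -> p ≤ F2 -> F1 = F2.
Proof.
case/minP => _ H1 H1' /minP [_ H2 H2'] Hp Hp1 Hp2.
have Hf : ◇ i (F1 ⊓ F2) = F1 ⊓ F2 by apply: fixed_meet.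
have Hnb : F1 ⊓ F2 != hbot o.
  apply: contra Hp => /eqP Hb; apply/eqP; apply: (hle_bot Hh).
  by rewrite -Hb; apply: (hle_meetI Hh).
have E1 := H1' _ (hmeet_l Hh _ _) Hf Hnb.
have E2 := H2' _ (hmeet_r Hh _ _) Hf Hnb.
by rewrite -E1 -{2}E2.
Qed.

Lemma atom_exists i x : x != hbot o ->
  exists m, is_minimal o i m && (m ⊓ x != hbot o).
Proof.
move=> Hx.
suff H : forall n v, (#|[pred y | y ≤ v]| <= n)%N -> ◇ i v = v -> v ⊓ x != hbot o ->
  exists m, is_minimal o i m && (m ⊓ x != hbot o).
  apply: (H _ (◇ i x) (leqnn _)); first exact: diaK.
  by rewrite (hmeetC Hh); move/(hleP o): (le_dia Hm i x) => ->.
elim=> [|n IH] v.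
  by rewrite leqn0 => /eqP /card0_eq /(_ v); rewrite inE (hle_refl Hh).
move=> Hn Hv Hvx.
have Hvb : v != hbot o.
  by apply: contra Hvx => /eqP ->; move/(hleP o): (hbot_le Hh x) => ->.
case: (boolP (is_minimal o i v)) => [Hmin|Hnmin]; first by exists v; rewrite Hmin.
move: Hnmin; rewrite /is_minimal Hvb Hv eqxx /= negb_forall => /existsP [d].
rewrite negb_imply => /andP [/andP [/andP [Hdv Hdne] /eqP Hd] Hdb].
have Hproper : forall w, w ≤ v -> w != v ->
    (#|[pred y | y ≤ w]| <= n)%N.
  move=> w Hwv Hwne; rewrite -ltnS; apply: leq_trans Hn.
  apply: proper_card; apply/properP; split.
    by apply/subsetP => y; rewrite !inE => Hy; apply: (hle_trans Hh) Hy Hwv.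
  exists v; rewrite !inE ?(hle_refl Hh) //=.
  apply/negP => Hvw; move/negP: Hwne; apply; apply/eqP; exact: (hle_anti Hh) Hwv Hvw.
case: (boolP (d ⊓ x == hbot o)) => Hdx; last first.
  by apply: (IH d) => //; apply: Hproper.
pose v' := v ⊓ hneg o d.
have Hv'f : ◇ i v' = v' by apply: fixed_meet => //; apply: fixed_neg.
have Hle : v ⊓ x ≤ v' ⊓ x.
  apply: (hle_meetI Hh); last exact: (hmeet_r Hh).
  apply: (hle_meetI Hh); first exact: (hmeet_l Hh).
  rewrite /hneg (hle_imp Hh); apply: (hle_trans Hh) _ (heq_le Hh (eqP Hdx)).
  rewrite (hmeetC Hh d x); apply: (hmeet_mono Hh) (hle_refl Hh _); apply: (hmeet_r Hh).
apply: (IH v') => //.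
- apply: Hproper; first exact: (hmeet_l Hh).
  apply/negP => /eqP Hvv; move/negP: Hdb; apply; apply/eqP; apply: (hle_bot Hh).
  have : d ≤ hneg o d by apply: (hle_trans Hh) Hdv _; rewrite -Hvv; apply: (hmeet_r Hh).
  by rewrite /hneg (hle_imp Hh) (hmeetxx Hh).
- apply: contra Hvx => /eqP Hb; apply/eqP; apply: (hle_bot Hh).
  by rewrite -Hb.
Qed.

End Epi.

Section Prod.
Variables (Ag : Type) (A : finType) (o : hops Ag A) (E : finType) (sim : Ag -> rel E).
Hypothesis Hsim : forall i, (forall e, sim i e e) /\ (forall e e', sim i e e' -> sim i e' e) /\
             (forall e1 e2 e3, sim i e1 e2 -> sim i e2 e3 -> sim i e1 e3).
Hypothesis He : is_epistemic o.
Let Hm : is_monadic o := He.1.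
Let Hh : is_heyting o := Hm.1.

Local Notation "x ⊓ y" := (hmeet o x y) (at level 40, left associativity).
Local Notation "x ⊔ y" := (hjoin o x y) (at level 45, left associativity).
Local Notation "x ≤ y" := (hle o x y) (at level 70).
Local Notation "◇" := (hdia o).
Local Notation "□" := (hbox o).
Local Notation po := (pops o sim).

Lemma simr i e : sim i e e. Proof. by have [H _] := Hsim i; apply: H. Qed.
Lemma sims i e e' : sim i e e' -> sim i e' e. Proof. by have [_ [H _]] := Hsim i; apply: H. Qed.
Lemma simt i e1 e2 e3 : sim i e1 e2 -> sim i e2 e3 -> sim i e1 e3.
Proof. by have [_ [_ H]] := Hsim i; apply: H. Qed.

Lemma sim_class i e e' : sim i e e' -> sim i ^~ e =1 sim i ^~ e'.
Proof.
move=> H x; apply/idP/idP => Hx; first exact: simt Hx H.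
by apply: simt Hx (sims H).
Qed.

Lemma pleP (f g : {ffun E -> A}) : reflect (forall e, f e ≤ g e) (hle po f g).
Proof.
rewrite /hle /=; apply: (iffP eqP) => [H e|H].
  by have := congr1 (fun h : {ffun E -> A} => h e) H; rewrite ffunE => /eqP.
by apply/ffunP => e; rewrite ffunE; apply/eqP; apply: H.
Qed.

Lemma pdiaE i (f : {ffun E -> A}) e :
  hdia po i f e = \big[hjoin o/hbot o]_(e' | sim i e' e) ◇ i (f e').
Proof. by rewrite /= ffunE. Qed.
Lemma pboxE i (f : {ffun E -> A}) e :
  hbox po i f e = \big[hmeet o/htop o]_(e' | sim i e' e) □ i (f e').
Proof. by rewrite /= ffunE. Qed.

Lemma pjoinE (f g : {ffun E -> A}) e : hjoin po f g e = f e ⊔ g e.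
Proof. by rewrite /= ffunE. Qed.
Lemma pmeetE (f g : {ffun E -> A}) e : hmeet po f g e = f e ⊓ g e.
Proof. by rewrite /= ffunE. Qed.
Lemma pimpE (f g : {ffun E -> A}) e : himp po f g e = himp o (f e) (g e).
Proof. by rewrite /= ffunE. Qed.
Lemma pbotE e : hbot po e = hbot o.
Proof. by rewrite /= ffunE. Qed.
Lemma ptopE e : htop po e = htop o.
Proof. by rewrite /= ffunE. Qed.

Lemma pdia_fixed i (f : {ffun E -> A}) e : ◇ i (hdia po i f e) = hdia po i f e.
Proof. by rewrite pdiaE; apply: (fixed_bigJ Hm) => j _; apply: (diaK Hm). Qed.

Lemma pdia_class i (f : {ffun E -> A}) e e' : sim i e e' -> hdia po i f e = hdia po i f e'.
Proof. by move=> H; rewrite !pdiaE; apply: eq_bigl => x; apply: sim_class. Qed.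
Lemma pbox_class i (f : {ffun E -> A}) e e' : sim i e e' -> hbox po i f e = hbox po i f e'.
Proof. by move=> H; rewrite !pboxE; apply: eq_bigl => x; apply: sim_class. Qed.

Lemma pops_heyting : is_heyting po.
Proof.
split; first by move=> x y z; apply/ffunP => e; rewrite !ffunE (hmeetA Hh).
split; first by move=> x y; apply/ffunP => e; rewrite !ffunE (hmeetC Hh).
split; first by move=> x y z; apply/ffunP => e; rewrite !ffunE (hjoinA Hh).
split; first by move=> x y; apply/ffunP => e; rewrite !ffunE (hjoinC Hh).
split; first by move=> x y; apply/ffunP => e; rewrite !ffunE (hmeetJ Hh).
split; first by move=> x y; apply/ffunP => e; rewrite !ffunE (hjoinM Hh).
split; first by move=> x; apply/ffunP => e; rewrite !ffunE (hmeet1 Hh).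
split; first by move=> x; apply/ffunP => e; rewrite !ffunE (hjoin0 Hh).
move=> x y z; apply/pleP/pleP => H e; move: (H e); rewrite !ffunE (hresid Hh) //.
Qed.

Lemma pops_monadic : is_monadic po.
Proof.
split; first exact: pops_heyting.
move=> i; split.
  move=> a b /pleP H; apply/pleP => e; rewrite !pdiaE.
  apply: (hbigJ_le Hh) => j Hj; apply: (hle_trans Hh) _ (hle_bigJf Hh _ Hj).
  by apply: (dia_mono Hm).
split.
  move=> a b /pleP H; apply/pleP => e; rewrite !pboxE.
  apply: (hle_bigM Hh) => j Hj; apply: (hle_trans Hh) (hbigM_lef Hh _ Hj) _.
  by apply: (box_mono Hm).
split.
  move=> a; apply/pleP => e; rewrite pdiaE.
  by apply: (hle_trans Hh) (le_dia Hm i (a e)) (hle_bigJf Hh (fun j => hdia o i (a j)) (simr i e)).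
split.
  move=> a; apply/pleP => e; rewrite pboxE.
  by apply: (hle_trans Hh) (hbigM_lef Hh (fun j => hbox o i (a j)) (simr i e)) (box_le Hm i (a e)).
split.
  move=> a b; apply/pleP => e; rewrite pjoinE !pdiaE.
  apply: (hbigJ_le Hh) => j Hj; rewrite pjoinE; apply: (hle_trans Hh) (dia_join Hm _ _ _) _.
  by apply: (hjoin_mono Hh); [apply: (hle_bigJf Hh (fun k => ◇ i (a k)) Hj) | apply: (hle_bigJf Hh (fun k => ◇ i (b k)) Hj)].
split.
  move=> a b; apply/pleP => e; rewrite pimpE !pboxE (hle_imp Hh).
  apply: (hle_bigM Hh) => j Hj.
  have H1 := @hbigM_lef _ _ _ Hh _ (fun e' => sim i e' e) (fun e' => □ i ((po.(himp) a b) e')) _ Hj.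
  have H2 := @hbigM_lef _ _ _ Hh _ (fun e' => sim i e' e) (fun e' => □ i (a e')) _ Hj.
  rewrite pimpE in H1.
  apply: (hle_trans Hh) (hmeet_mono Hh H1 H2) _.
  by rewrite -(hle_imp Hh); apply: (box_imp Hm).
split.
  move=> a; apply/pleP => e; rewrite (pboxE i _ e).
  apply: (hle_bigM Hh) => j Hj; rewrite (pdia_class _ (sims Hj)).
  by apply: (fixed_box Hm); apply: pdia_fixed.
split.
  move=> a; apply/pleP => e; rewrite (pdiaE i _ e).
  apply: (hbigJ_le Hh) => j Hj; rewrite (pbox_class _ Hj).
  rewrite pboxE; apply: (hle_bigM Hh) => k Hk.
  apply: (hle_trans Hh) (diabox_le Hm i (a k)); apply: (dia_mono Hm).
  exact: (hbigM_lef Hh).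
split.
  move=> a b; apply/pleP => e; rewrite pimpE (hle_imp Hh) (hmeetC Hh) pdiaE.
  rewrite -(hle_imp Hh); apply: (hbigJ_le Hh) => j Hj; rewrite (hle_imp Hh) (hmeetC Hh).
  rewrite -(hle_imp Hh).
  have H1 := @hbigM_lef _ _ _ Hh _ (fun e' => sim i e' e) (fun e' => □ i ((po.(himp) a b) e')) _ Hj.
  rewrite pimpE in H1.
  rewrite pboxE; apply: (hle_trans Hh) H1 _; apply: (hle_trans Hh) (box_imp_dia Hm i _ _) _.
  apply: (himp_mono Hh); rewrite pdiaE; exact: (hle_bigJf Hh (fun k => ◇ i (b k)) Hj).
split.
  apply/pleP => e; rewrite pdiaE pbotE; apply: (hbigJ_le Hh) => j _.
  by rewrite pbotE (dia_bot Hm); apply: (hle_refl Hh).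
apply/pleP => e; rewrite pboxE ptopE; apply: (hle_bigM Hh) => j _.
by rewrite ptopE (box_top Hm); apply: (hle_refl Hh).
Qed.

Lemma pops_epistemic : is_epistemic po.
Proof.
split; first exact: pops_monadic.
move=> i a; apply/ffunP => e; rewrite pjoinE /hneg pimpE pbotE ptopE.
by have := He.2 i (hdia po i a e); rewrite pdia_fixed.
Qed.

End Prod.

Section Quot.
Variables (Ag : Type) (T : finType) (o : hops Ag T) (c : T).
Hypothesis He : is_epistemic o.
Let Hm : is_monadic o := He.1.
Let Hh : is_heyting o := Hm.1.

Local Notation "x ⊓ y" := (hmeet o x y) (at level 40, left associativity).
Local Notation "x ⊔ y" := (hjoin o x y) (at level 45, left associativity).
Local Notation "x ≤ y" := (hle o x y) (at level 70).
Local Notation "◇" := (hdia o).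
Local Notation "□" := (hbox o).
Local Notation q := (qops o c).
Local Notation Q := (qtype o c).

Lemma qvalK (p : Q) : val p ⊓ c = val p.
Proof. by case: p => y /= /codomP [x ->]; rewrite -(hmeetA Hh) (hmeetxx Hh). Qed.
Lemma qval_le (p : Q) : val p ≤ c.
Proof. by apply/eqP; apply: qvalK. Qed.
Lemma qrep_le x : qrep o c x -> x ≤ c.
Proof. by move=> H; apply: (qval_le (exist _ x H)). Qed.
Lemma qrepK x : qrep o c x -> x ⊓ c = x.
Proof. by move=> H; apply: (qvalK (exist _ x H)). Qed.
Lemma qleE (p p' : Q) : hle q p p' = (val p ≤ val p').
Proof.
rewrite /hle -val_eqE /=.
have Hp := qval_le p; have Hp' := qval_le p'.
by rewrite (_ : val p ⊓ val p' ⊓ c = val p ⊓ val p') //; latE.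
Qed.
Lemma qeqE (p p' : Q) : val p = val p' -> p = p'.
Proof. exact: val_inj. Qed.

Lemma qops_heyting : is_heyting q.
Proof.
split; first by move=> x y z; apply: val_inj => /=;
  have := qval_le x; have := qval_le y; have := qval_le z => *; latE.
split; first by move=> x y; apply: val_inj => /=;
  have := qval_le x; have := qval_le y => *; latE.
split; first by move=> x y z; apply: val_inj => /=;
  have := qval_le x; have := qval_le y; have := qval_le z => *; latE.
split; first by move=> x y; apply: val_inj => /=;
  have := qval_le x; have := qval_le y => *; latE.
split; first by move=> x y; apply: val_inj => /=;
  have := qval_le x; have := qval_le y => *; latE.
split; first by move=> x y; apply: val_inj => /=;
  have := qval_le x; have := qval_le y => *; latE.
split; first by move=> x; apply: val_inj => /=; have := qval_le x => *; latE.
split; first by move=> x; apply: val_inj => /=; have := qval_le x => *; latE.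
move=> x y z; rewrite !qleE /=.
have Hx := qval_le x; have Hy := qval_le y.
rewrite (hle_meet Hh) Hx andbT -(hresid Hh).
by rewrite (_ : val x ⊓ val y ⊓ c = val x ⊓ val y) //; latE.
Qed.

Lemma qops_monadic : is_monadic q.
Proof.
split; first exact: qops_heyting.
move=> i; split.
  move=> [a Ha0] [b Hb0]; rewrite !qleE /= (qrepK Ha0) (qrepK Hb0) => H.
  by apply: (hmeet_mono Hh) (hle_refl Hh _); apply: (dia_mono Hm).
split.
  move=> [a Ha0] [b Hb0]; rewrite !qleE /= => H.
  by apply: (hmeet_mono Hh) (hle_refl Hh _); apply: (box_mono Hm); apply: (himp_mono Hh).
split.
  move=> [a Ha0]; rewrite !qleE /= ?(qrepK Ha0); apply: (hle_meetI Hh) (qrep_le Ha0).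
  exact: (le_dia Hm).
split.
  move=> [a Ha0]; rewrite !qleE /=.
  apply: (hmp2 Hh (y := c)); first exact: (hmeet_r Hh).
  apply: (hmeet_leL Hh); exact: (box_le Hm).
split.
  move=> [a Ha0] [b Hb0]; rewrite !qleE /= (qrepK Ha0) (qrepK Hb0).
  have Ha := qrep_le Ha0; have Hb := qrep_le Hb0.
  have Eab : (a ⊔ b) ⊓ c = a ⊔ b by latE.
  rewrite !Eab (dia_joinE Hm) (hmeetC Hh) (hdistr Hh).
  by lat.
split.
  move=> [a Ha0] [b Hb0]; rewrite !qleE /=.
  have Ha := qrep_le Ha0; have Hb := qrep_le Hb0.
  apply: (hle_meetI Hh); last exact: (hmeet_r Hh).
  rewrite (hle_imp Hh); apply: (hle_meetI Hh); last by lat.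
  apply: (hle_trans Hh) (hmeet_mono Hh (hmeet_l Hh _ _) (hmeet_l Hh _ _)) _.
  rewrite -(hle_imp Hh); apply: (hle_trans Hh) _ (box_imp Hm _ _ _).
  apply: (box_mono Hm); rewrite (hle_imp Hh).
  rewrite (hle_imp Hh); apply: (hmp2 Hh (y := a)).
    apply: (hmp2 Hh (y := c)); first by lat.
    by lat.
  apply: (hmp2 Hh (y := c)); first by lat.
  apply: (hmeet_leL Hh); apply: (hmeet_leL Hh); apply: (himp_mono Hh).
  exact: (hmeet_l Hh).
split.
  move=> [a Ha0]; rewrite !qleE /= ?(qrepK Ha0).
  apply: (hle_meetI Hh); last exact: (hmeet_r Hh).
  apply: (hmeet_leL Hh); apply: (hle_trans Hh) (dia_box Hm i _) _.
  by apply: (box_mono Hm); rewrite (hle_imp Hh); apply: (hle_refl Hh).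
split.
  move=> [a Ha0]; rewrite !qleE /= ?(qrepK Ha0).
  apply: (hmeet_mono Hh) (hle_refl Hh _).
  apply: (hle_trans Hh) _ (diabox_le Hm i _); apply: (dia_mono Hm).
  by lat.
split.
  move=> [a Ha0] [b Hb0]; rewrite !qleE /= (qrepK Ha0) (qrepK Hb0).
  have Ha := qrep_le Ha0; have Hb := qrep_le Hb0.
  apply: (hle_meetI Hh); last exact: (hmeet_r Hh).
  rewrite (hle_imp Hh); apply: (hle_meetI Hh); last by lat.
  apply: (hle_trans Hh) (hmeet_mono Hh (hmeet_l Hh _ _) (hmeet_l Hh _ _)) _.
  rewrite -(hle_imp Hh); apply: (hle_trans Hh) _ (box_imp_dia Hm _ _ _).
  apply: (box_mono Hm); rewrite (hle_imp Hh).
  apply: (hmp2 Hh (y := c)); first by lat.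
  rewrite (hle_imp Hh); apply: (hmp2 Hh (y := a)); first by lat.
  apply: (hle_trans Hh) _ (hmeet_l Hh _ c).
  apply: (hmp2 Hh (y := c)); first by lat.
  by lat.
split.
  rewrite !qleE /=.
  rewrite (_ : hbot o ⊓ c = hbot o); last by latE.
  rewrite (_ : hbot o ⊓ c = hbot o); last by latE.
  by rewrite (dia_bot Hm); lat.
rewrite !qleE /=.
apply: (hle_meetI Hh); last by lat.
have H1 : htop o ≤ himp o c (htop o ⊓ c) by rewrite (hle_imp Hh); lat.
by apply: (hle_trans Hh) _ (box_mono Hm i H1); rewrite (box_top Hm); lat.
Qed.

Lemma qops_epistemic : is_epistemic q.
Proof.
split; first exact: qops_monadic.
move=> i a; apply: val_inj => /=; rewrite !qvalK.
set v := ◇ i (val a).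
have Hv : ◇ i v = v by apply: (diaK Hm).
have Hc : v ⊔ hneg o v = htop o by have := He.2 i v; rewrite Hv.
rewrite (_ : hbot o ⊓ c = hbot o); last by latE.
apply: (hle_anti Hh); first by lat.
apply: (hle_meetI Hh); last by lat.
apply: (hle_trans Hh (y := c ⊓ (v ⊔ hneg o v))); first by rewrite Hc; lat.
rewrite (hdistr Hh).
apply: (hjoin_mono Hh); first by lat.
apply: (hle_meetI Hh); last by lat.
apply: (hmeet_leR Hh); apply: (himp_anti Hh); exact: (hmeet_l Hh).
Qed.
End Quot.

Import GRing.Theory Num.Theory.

Section Main.
Variables (Ag : Type) (R : realType) (A : finType) (o : hops Ag A)
  (mu : Ag -> A -> R) (E : finType) (sim : Ag -> rel E) (P : Ag -> E -> R)
  (phi : seq A) (pre : 'I_(size phi) -> E -> R).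
Hypothesis HA : is_APE o mu.
Hypothesis HE : is_pes o sim P pre.

Let He : is_epistemic o := HA.1.
Let Hm : is_monadic o := He.1.
Let Hh : is_heyting o := Hm.1.
Let Hsim := HE.2.1.

Local Notation "x ⊓ y" := (hmeet o x y) (at level 40, left associativity).
Local Notation "x ⊔ y" := (hjoin o x y) (at level 45, left associativity).
Local Notation "x ≤ y" := (hle o x y) (at level 70).
Local Notation "◇" := (hdia o).
Local Notation po := (pops o sim).
Local Notation c := (prebar o pre).
Local Notation q := (upd_ops o sim pre).
Local Notation Q := (qtype po c).

Let Hpe : is_epistemic po := pops_epistemic Hsim He.
Let Hpm : is_monadic po := Hpe.1.
Let Hph : is_heyting po := Hpm.1.
Let Hqe : is_epistemic q := qops_epistemic c Hpe.
Let Hqm : is_monadic q := Hqe.1.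
Let Hqh : is_heyting q := Hqm.1.

Lemma qle_pt (p p' : Q) : hle q p p' -> forall e, val p e ≤ val p' e.
Proof. by rewrite (qleE Hpe) => /pleP. Qed.
Lemma qval_pt (p : Q) e : val p e ≤ c e.
Proof. by have /pleP := qval_le Hpe p; apply. Qed.

Lemma min_shape i (F : Q) : is_minimal q i F ->
  exists m e0, is_minimal o i m /\
    forall e, val F e = if sim i e e0 then m ⊓ c e else hbot o.
Proof.
move=> HF; have [HFb HFf HFmin] := minP HF.
have [e0 He0] : exists e0, val F e0 != hbot o.
  apply/existsP; apply: contraR HFb; rewrite negb_exists => /forallP H.
  apply/eqP; apply: val_inj; apply/ffunP => e /=.
  by rewrite !ffunE; move/negPn/eqP: (H e) => ->; latE.
have HFe : forall e, val F e =
    \big[hjoin o/hbot o]_(e' | sim i e' e) ◇ i (val F e') ⊓ c e.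
  move=> e; have := congr1 (fun p : Q => val p e) HFf => /= <-.
  rewrite !ffunE; congr (_ ⊓ _); apply: eq_bigr => e' _.
  by rewrite ffunE; have := qval_pt F e' => /eqP ->.
have [m /andP [Hmin HmF]] := atom_exists Hm i He0.
have Hm_le : m ≤ ◇ i (val F e0) := min_le_dia Hm Hmin HmF.
pose G : {ffun E -> A} := [ffun e => if sim i e e0 then m ⊓ c e else hbot o].
have GE : forall e, G e = (if sim i e e0 then m ⊓ c e else hbot o).
  by move=> e; rewrite ffunE.
have HGc : hmeet po G c = G.
  by apply/ffunP => e; rewrite (pmeetE o sim) GE; case: (sim i e e0); latE.
pose d := qproj po c G.
have Hd : val d = G by exact: HGc.
have Hmc0 : m ⊓ val F e0 ≤ m ⊓ c e0.
  by have := qval_pt F e0 => ?; lat.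
have Hdia0 : ◇ i (m ⊓ c e0) = m.
  have [_ Hmf Hmm] := minP Hmin; apply: Hmm.
  - by rewrite -{2}Hmf; apply: (dia_mono Hm); lat.
  - exact: (diaK Hm).
  - apply: contra HmF => /eqP Hb; apply/eqP; apply: (hle_bot Hh).
    apply: (hle_trans Hh) Hmc0 _; rewrite -Hb; exact: (le_dia Hm).
have HdF : hle q d F.
  rewrite (qleE Hpe) Hd; apply/pleP => e; rewrite GE.
  case: ifP => Hee0; last exact: (hbot_le Hh).
  rewrite HFe; apply: (hmeet_mono Hh) (hle_refl Hh _).
  apply: (hle_trans Hh) Hm_le _.
  exact: (@hle_bigJf _ _ _ Hh _ (fun e' => sim i e' e) (fun e' => ◇ i (val F e')) e0 (sims Hsim Hee0)).
have Hdf : hdia q i d = d.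
  apply: val_inj; apply/ffunP => e.
  have -> : val (hdia q i d) = hmeet po (hdia po i (hmeet po (val d) c)) c by [].
  rewrite Hd HGc (pmeetE o sim) (pdiaE o sim) GE.
  case: ifP => Hee0.
    congr (_ ⊓ _); apply: (hle_anti Hh).
      apply: (hbigJ_le Hh) => e' He'; rewrite GE (simt Hsim He' Hee0).
      have [_ Hmf _] := minP Hmin; rewrite -{2}Hmf; apply: (dia_mono Hm); lat.
    apply: (hle_trans Hh) _ (@hle_bigJf _ _ _ Hh _ (fun e' => sim i e' e) (fun e' => ◇ i (G e')) e0 (sims Hsim Hee0)).
    by rewrite GE (simr Hsim) Hdia0; apply: (hle_refl Hh).
  apply: (hle_anti Hh); last exact: (hbot_le Hh).
  apply: (hmeet_leL Hh); apply: (hbigJ_le Hh) => e' He'.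
  rewrite GE; case: ifP => He'0.
    by move: Hee0; rewrite (simt Hsim (sims Hsim He') He'0).
  by rewrite (dia_bot Hm); apply: (hle_refl Hh).
have Hdb : d != hbot q.
  apply: contra HmF => /eqP Hb.
  apply/eqP; apply: (hle_bot Hh); apply: (hle_trans Hh) Hmc0 _.
  have := congr1 (fun p : Q => val p e0) Hb; rewrite Hd GE (simr Hsim) => ->.
  have -> : val (hbot q) e0 = hbot o ⊓ c e0 by rewrite /= ffunE (pbotE o sim).
  by lat.
have HdFe := HFmin d HdF Hdf Hdb.
exists m, e0; split => // e.
by rewrite -HdFe Hd GE.
Qed.

End Main.

Import Order.TTheory GRing.Theory Num.Theory.
Local Open Scope ring_scope.

Section Main.
Variables (Ag : Type) (R : realType) (A : finType) (o : hops Ag A)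
  (mu : Ag -> A -> R) (E : finType) (sim : Ag -> rel E) (P : Ag -> E -> R)
  (phi : seq A) (pre : 'I_(size phi) -> E -> R).
Hypothesis HA : is_APE o mu.
Hypothesis HE : is_pes o sim P pre.

Let He : is_epistemic o := HA.1.
Let Hm : is_monadic o := He.1.
Let Hh : is_heyting o := Hm.1.
Let Hsim := HE.2.1.

Local Notation "x ⊓ y" := (hmeet o x y) (at level 40, left associativity).
Local Notation "x ⊔ y" := (hjoin o x y) (at level 45, left associativity).
Local Notation "x ≤ y" := (hle o x y) (at level 70).
Local Notation "◇" := (hdia o).
Local Notation po := (pops o sim).
Local Notation c := (prebar o pre).
Local Notation q := (upd_ops o sim pre).
Local Notation Q := (qtype po c).

Let Hpe : is_epistemic po := pops_epistemic Hsim He.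
Let Hpm : is_monadic po := Hpe.1.
Let Hph : is_heyting po := Hpm.1.
Let Hqe : is_epistemic q := qops_epistemic c Hpe.
Let Hqm : is_monadic q := Hqe.1.
Let Hqh : is_heyting q := Hqm.1.

Local Notation lab := (lab o).
Local Notation I := ('I_(size phi)).

Lemma phi_lt_le (a b : I) : phi_lt o a b -> lab a ≤ lab b.
Proof.
rewrite /phi_lt => /orP [/andP [_ /andP [H _]] //|/andP [/eqP -> _]].
exact: (hle_refl Hh).
Qed.
Lemma phi_lt_irr (a : I) : ~~ phi_lt o a a.
Proof. by rewrite /phi_lt eqxx ltnn. Qed.
Lemma phi_lt_trans (a b d : I) : phi_lt o a b -> phi_lt o b d -> phi_lt o a d.
Proof.
move=> Hab Hbd; have Lab := phi_lt_le Hab; have Lbd := phi_lt_le Hbd.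
rewrite /phi_lt; case: (eqVneq (lab a) (lab d)) => Had /=.
  have Hb1 : lab a = lab b by apply: (hle_anti Hh Lab); rewrite Had.
  have Hb2 : lab b = lab d by rewrite -Hb1.
  move: Hab Hbd; rewrite /phi_lt Hb1 Hb2 eqxx /= => H1 H2.
  exact: ltn_trans H1 H2.
by rewrite /hlt Had andbT orbF; apply: (hle_trans Hh) Lab Lbd.
Qed.

Lemma mb_lt (a b : I) : b \in mb o a -> phi_lt o b a.
Proof. by rewrite inE => /andP []. Qed.
Lemma mb_le (a b : I) : b \in mb o a -> lab b ≤ lab a.
Proof. by move/mb_lt/phi_lt_le. Qed.
Lemma mb_max (a b d : I) : b \in mb o a -> phi_lt o b d -> phi_lt o d a -> False.
Proof.
rewrite inE => /andP [_ /forallP H] H1 H2.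
by move: (H d); rewrite H1 H2.
Qed.
Lemma mb_disj (a b1 b2 : I) : b1 \in mb o a -> b2 \in mb o a -> b1 != b2 ->
  lab b1 ⊓ lab b2 = hbot o.
Proof.
move=> H1 H2 Hne; case: (eqVneq (lab b1) (lab b2)) => Heq.
  have Hv : val b1 != val b2 by [].
  case: (ltngtP (val b1) (val b2)) => Hlt.
  - by exfalso; apply: (mb_max H1 _ (mb_lt H2)); rewrite /phi_lt Heq eqxx Hlt orbT.
  - by exfalso; apply: (mb_max H2 _ (mb_lt H1)); rewrite /phi_lt Heq eqxx Hlt orbT.
  - by move: Hv; rewrite Hlt eqxx.
have := HE.2.2.2.2.1 b1 b2 Heq; case=> [//|[Hl|Hl]].
  by exfalso; apply: (mb_max H1 _ (mb_lt H2)); rewrite /phi_lt Heq Hl.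
by exfalso; apply: (mb_max H2 _ (mb_lt H1)); rewrite /phi_lt eq_sym Heq Hl.
Qed.

Section Mu.
Variables (i : Ag) (m : A).
Hypothesis Hmin : is_minimal o i m.
Local Notation μ := (mu i).

Let Hmeas : is_measure o i μ := HA.2 i.

Lemma dom_le x : x ≤ m -> in_dom o i x.
Proof. by move=> H; apply/existsP; exists m; rewrite Hmin. Qed.
Lemma mu_bot : μ (hbot o) = 0.
Proof.
case: Hmeas => [[_ [_ [_ H]]] _]; apply: H; exists m; apply: dom_le.
exact: (hle_refl Hh).
Qed.
Lemma mu_ge0 x : x ≤ m -> 0 <= μ x.
Proof. by case: Hmeas => [[H _] _] Hx; apply: H; apply: dom_le. Qed.
Lemma mu_mono x y : x ≤ y -> y ≤ m -> μ x <= μ y.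
Proof.
case: Hmeas => [[_ [H _]] _] Hxy Hy; apply: H => //; apply: dom_le => //.
exact: (hle_trans Hh) Hxy Hy.
Qed.
Lemma mu_add x y : x ≤ m -> y ≤ m -> μ (x ⊔ y) = μ x + μ y - μ (x ⊓ y).
Proof. by case: Hmeas => [[_ [_ [H _]]] _] Hx Hy; apply: H Hmin Hx Hy. Qed.
Lemma mu_strict x y : x ≤ y -> x != y -> y ≤ m -> μ x < μ y.
Proof.
case: Hmeas => [_ [H _]] Hxy Hne Hy; apply: H Hmin _ Hy.
by rewrite /hlt Hxy Hne.
Qed.

Let da (a : I) := \big[hjoin o/hbot o]_(b <- enum (mb o a)) lab b.

Lemma da_le (a : I) : da a ≤ lab a.
Proof. by apply: (hbigJ_le_seq Hh) => b; rewrite mem_enum; apply: mb_le. Qed.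

Lemma sum_mb (a : I) x : x ≤ m -> \sum_(b in mb o a) μ (x ⊓ lab b) = μ (x ⊓ da a).
Proof.
move=> Hx; rewrite -big_enum /da.
have : uniq (enum (mb o a)) by apply: enum_uniq.
have : forall b, b \in enum (mb o a) -> b \in mb o a by move=> b; rewrite mem_enum.
elim: (enum _) => [|b s IH] Hs Hu.
  rewrite !big_nil (_ : x ⊓ hbot o = hbot o) ?mu_bot //; latE.
rewrite !big_cons IH; last by case/andP: Hu.
  2: by move=> b' Hb'; apply: Hs; rewrite inE Hb' orbT.
set J := \big[hjoin o/hbot o]_(j <- s) lab j.
have HJ : lab b ⊓ J = hbot o.
  apply: (hle_bot Hh); rewrite (hmeetC Hh) (hresid Hh).
  apply: (hbigJ_le_seq Hh) => b' Hb'; rewrite -(hresid Hh).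
  rewrite (mb_disj (Hs b' _) (Hs b _)) ?inE ?Hb' ?orbT ?eqxx //; first exact: (hle_refl Hh).
  by apply: contraTneq Hb' => ->; case/andP: Hu.
rewrite (hdistr Hh) mu_add; try by lat.
rewrite (_ : x ⊓ lab b ⊓ (x ⊓ J) = hbot o) ?mu_bot ?subr0 //.
apply: (hle_bot Hh); rewrite -HJ; lat.
Qed.

Lemma mu_atE (a : I) x : x ≤ m -> mu_at o mu i a x = μ (x ⊓ lab a) - μ (x ⊓ da a).
Proof. by move=> Hx; rewrite /mu_at sum_mb. Qed.

Lemma mu_at_mono (a : I) x y : x ≤ y -> y ≤ m -> mu_at o mu i a x <= mu_at o mu i a y.
Proof.
move=> Hxy Hy; have Hx : x ≤ m by apply: (hle_trans Hh) Hxy Hy.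
rewrite !mu_atE //; have Hd := da_le a.
set l := lab a; set d := da a.
have H1 := mu_add (x := x ⊓ l) (y := y ⊓ d).
have H2 : x ⊓ l ⊓ (y ⊓ d) = x ⊓ d by latE.
have H3 : μ (x ⊓ l ⊔ y ⊓ d) <= μ (y ⊓ l) by apply: mu_mono; lat.
rewrite H2 in H1.
have H4 : x ⊓ l ≤ m by lat.
have H5 : y ⊓ d ≤ m by lat.
have := H1 H4 H5; lra.
Qed.

Lemma mu_meetJ x y l : x ≤ m -> y ≤ m ->
  μ ((x ⊔ y) ⊓ l) + μ ((x ⊓ y) ⊓ l) = μ (x ⊓ l) + μ (y ⊓ l).
Proof.
move=> Hx Hy.
rewrite (hmeetC Hh) (hdistr Hh) mu_add.
all: try by lat.
rewrite (_ : x ⊓ y ⊓ l = l ⊓ x ⊓ (l ⊓ y)); last by latE.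
rewrite (hmeetC Hh l x) (hmeetC Hh l y).
lra.
Qed.

Lemma mu_at_add (a : I) x y : x ≤ m -> y ≤ m ->
  mu_at o mu i a (x ⊔ y) + mu_at o mu i a (x ⊓ y) = mu_at o mu i a x + mu_at o mu i a y.
Proof.
move=> Hx Hy.
have Hj : x ⊔ y ≤ m by lat.
have Hmt : x ⊓ y ≤ m by lat.
rewrite !mu_atE //.
have := mu_meetJ (lab a) Hx Hy; have := mu_meetJ (da a) Hx Hy; lra.
Qed.

Lemma mu_at_bot (a : I) : mu_at o mu i a (hbot o) = 0.
Proof.
rewrite mu_atE; last exact: (hbot_le Hh).
have E1 : hbot o ⊓ lab a = hbot o by latE.
have E2 : hbot o ⊓ da a = hbot o by latE.
by rewrite E1 E2 mu_bot subrr.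
Qed.

Lemma mu_at_ge0 (a : I) x : x ≤ m -> 0 <= mu_at o mu i a x.
Proof. by move=> Hx; rewrite -(mu_at_bot a); apply: mu_at_mono => //; apply: (hbot_le Hh). Qed.

Local Notation pm := (pmu o P pre mu i).

Lemma P_pos e : 0 < P i e.
Proof. by case/andP: (HE.2.2.1 i e). Qed.
Lemma pre_ge0 (a : I) e : 0 <= pre a e.
Proof. exact: HE.2.2.2.2.2.1. Qed.
Lemma pre_down (a b : I) e : pre a e = 0 -> phi_lt o a b -> pre b e = 0.
Proof. exact: HE.2.2.2.2.2.2.2. Qed.

Lemma ev_mono e x y : x ≤ y -> y ≤ m ->
  \sum_(a < size phi) P i e * mu_at o mu i a x * pre a e <=
  \sum_(a < size phi) P i e * mu_at o mu i a y * pre a e.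
Proof.
move=> Hxy Hy; apply: ler_sum => a _.
apply: ler_wpM2r; first exact: pre_ge0.
apply: ler_wpM2l; first exact: ltW (P_pos e).
exact: mu_at_mono.
Qed.

Lemma ev_strict e x y : x ≤ y -> x != y -> y ≤ m -> y ≤ c e ->
  \sum_(a < size phi) P i e * mu_at o mu i a x * pre a e <
  \sum_(a < size phi) P i e * mu_at o mu i a y * pre a e.
Proof.
move=> Hxy Hne Hy Hyc.
pose S := fun a : I => (pre a e != 0) && (x ⊓ lab a != y ⊓ lab a).
have [a1 Ha1] : exists a, S a.
  case: (boolP [exists a, S a]) => [/existsP //|Hn]; exfalso.
  move/negP: Hne; apply; apply/eqP; apply: (hle_anti Hh Hxy).
  rewrite -(hmeet_eql Hyc) ffunE; apply: (hle_trans Hh) (hmeet_bigJ Hh _ _ _) _.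
  apply: (hbigJ_le Hh) => a Ha.
  have : ~~ S a by move: Hn; rewrite negb_exists => /forallP.
  rewrite /S Ha /= negbK => /eqP <-; exact: (hmeet_l Hh).
have Hex : forall n a, (#|[pred b | phi_lt o b a]| <= n)%N -> S a ->
    exists a0, S a0 && [forall b, phi_lt o b a0 ==> ~~ S b].
  elim=> [|n IH] a Hn Ha; (case: (boolP [forall b, phi_lt o b a ==> ~~ S b]) => Hf;
    first by exists a; rewrite Ha Hf);
  move: Hf; rewrite negb_forall => /existsP [b]; rewrite negb_imply negbK => /andP [Hba Sb].
    by move: Hn; rewrite leqn0 => /eqP /card0_eq /(_ b); rewrite inE Hba.
  apply: (IH b) => //; rewrite -ltnS; apply: leq_trans Hn.
  apply: proper_card; apply/properP; split.
    by apply/subsetP => d; rewrite !inE => Hd; apply: phi_lt_trans Hd Hba.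
  by exists b; rewrite !inE ?Hba // (negbTE (phi_lt_irr b)).
have [a0 /andP [Sa0 /forallP Hmin0]] := Hex _ a1 (leqnn _) Ha1.
case/andP: Sa0 => Hpre0 Hxy0.
have Hmb : forall b, b \in mb o a0 -> x ⊓ lab b = y ⊓ lab b.
  move=> b Hb; have Hlt := mb_lt Hb.
  have Hpb : pre b e != 0.
    by apply: contra Hpre0 => /eqP H0; apply/eqP; apply: pre_down H0 Hlt.
  by move: (Hmin0 b); rewrite Hlt /= /S Hpb /= negbK => /eqP.
have Hstr : mu_at o mu i a0 x < mu_at o mu i a0 y.
  rewrite /mu_at.
  have -> : \sum_(b in mb o a0) μ (x ⊓ lab b) = \sum_(b in mb o a0) μ (y ⊓ lab b).
    by apply: eq_bigr => b Hb; rewrite Hmb.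
  have Hla : x ⊓ lab a0 ≤ y ⊓ lab a0 by lat.
  have Hlm : y ⊓ lab a0 ≤ m by lat.
  have := mu_strict Hla Hxy0 Hlm; lra.
rewrite (bigD1 a0) //= [X in _ < X](bigD1 a0) //=.
apply: ltr_leD.
  have Hp : 0 < pre a0 e by rewrite lt0r Hpre0 pre_ge0.
  by rewrite ltr_pM2r // ltr_pM2l // P_pos.
apply: ler_sum => a _.
apply: ler_wpM2r; first exact: pre_ge0.
apply: ler_wpM2l; first exact: ltW (P_pos e).
exact: mu_at_mono.
Qed.

Lemma pmu_mono (f g : {ffun E -> A}) : (forall e, f e ≤ g e) -> (forall e, g e ≤ m) ->
  pm f <= pm g.
Proof. by move=> H1 H2; apply: ler_sum => e _; apply: ev_mono. Qed.

Lemma pmu_strict (f g : {ffun E -> A}) : (forall e, f e ≤ g e) -> (forall e, g e ≤ m) ->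
  (forall e, g e ≤ c e) -> f != g -> pm f < pm g.
Proof.
move=> H1 H2 H3 Hne.
have [e Hfe] : exists e, f e != g e.
  apply/existsP; apply: contraR Hne; rewrite negb_exists => /forallP H.
  by apply/eqP/ffunP => e; apply/eqP; rewrite -[_ == _]negbK H.
rewrite /pmu (bigD1 e) //= [X in _ < X](bigD1 e) //=.
apply: ltr_leD; first exact: ev_strict.
by apply: ler_sum => e' _; apply: ev_mono.
Qed.

Lemma pmu_bot (f : {ffun E -> A}) : (forall e, f e = hbot o) -> pm f = 0.
Proof.
move=> H; rewrite /pmu big1 // => e _; rewrite big1 // => a _.
by rewrite H mu_at_bot mulr0 mul0r.
Qed.

Lemma pmu_ge0 (f : {ffun E -> A}) : (forall e, f e ≤ m) -> 0 <= pm f.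
Proof.
move=> H; apply: sumr_ge0 => e _; apply: sumr_ge0 => a _.
apply: mulr_ge0; last exact: pre_ge0.
by apply: mulr_ge0; [exact: ltW (P_pos e) | exact: mu_at_ge0].
Qed.

Lemma pmu_add (f g : {ffun E -> A}) : (forall e, f e ≤ m) -> (forall e, g e ≤ m) ->
  pm (hjoin po f g) + pm (hmeet po f g) = pm f + pm g.
Proof.
move=> Hf Hg; rewrite /pmu -!big_split; apply: eq_bigr => e _.
rewrite -!big_split; apply: eq_bigr => a _ /=.
rewrite (pjoinE o sim) (pmeetE o sim).
have := mu_at_add a (Hf e) (Hg e).
rewrite -!mulrDl -!mulrDr => ->; done.
Qed.

End Mu.

End Main.

Import Order.TTheory GRing.Theory Num.Theory.
Local Open Scope ring_scope.

Section Main.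
Variables (Ag : Type) (R : realType) (A : finType) (o : hops Ag A)
  (mu : Ag -> A -> R) (E : finType) (sim : Ag -> rel E) (P : Ag -> E -> R)
  (phi : seq A) (pre : 'I_(size phi) -> E -> R).
Hypothesis HA : is_APE o mu.
Hypothesis HE : is_pes o sim P pre.

Let He : is_epistemic o := HA.1.
Let Hm : is_monadic o := He.1.
Let Hh : is_heyting o := Hm.1.
Let Hsim := HE.2.1.

Local Notation "x ⊓ y" := (hmeet o x y) (at level 40, left associativity).
Local Notation "x ⊔ y" := (hjoin o x y) (at level 45, left associativity).
Local Notation "x ≤ y" := (hle o x y) (at level 70).
Local Notation "◇" := (hdia o).
Local Notation po := (pops o sim).
Local Notation c := (prebar o pre).
Local Notation q := (upd_ops o sim pre).
Local Notation Q := (qtype po c).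

Let Hpe : is_epistemic po := pops_epistemic Hsim He.
Let Hpm : is_monadic po := Hpe.1.
Let Hph : is_heyting po := Hpm.1.
Let Hqe : is_epistemic q := qops_epistemic c Hpe.
Let Hqm : is_monadic q := Hqe.1.
Let Hqh : is_heyting q := Hqm.1.

Section Fin.
Variable i : Ag.
Local Notation qm := (@upd_mu Ag R A o E sim P phi pre mu i).
Local Notation pm := (pmu o P pre mu i).

Lemma shape_le (F : Q) : is_minimal q i F ->
  exists m, is_minimal o i m /\ forall p : Q, hle q p F -> forall e, val p e ≤ m.
Proof.
move=> HF; have [m [e0 [Hmin HFe]]] := min_shape HA HE HF.
exists m; split => // p HpF e.
apply: (hle_trans Hh) (qle_pt HA HE HpF e) _; rewrite HFe.
by case: ifP => _; lat.
Qed.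

Lemma qm_eq (F p : Q) : is_minimal q i F -> hle q p F -> qm p = pm (val p) / pm (val F).
Proof.
move=> HF HpF; rewrite /upd_mu /qmu.
case: eqP => [Hb|Hnb].
  have [m [Hmin _]] := shape_le HF.
  rewrite (pmu_bot HA HE Hmin (f := val p)) ?mul0r // => e.
  rewrite Hb /= (pmeetE o sim) (pbotE o sim); latE.
case: pickP => [f /andP [Hf Hpf]|Hnone].
  have Hpb : p != hbot q by apply/eqP.
  by rewrite (min_unique Hqm Hf HF Hpb Hpf HpF).
by move: (Hnone F); rewrite HF HpF.
Qed.

Lemma pm_min_pos (F : Q) : is_minimal q i F -> 0 < pm (val F).
Proof.
move=> HF; have [m [Hmin Hle]] := shape_le HF.
have [HFb _ _] := minP HF.
have -> : 0 = pm (val (hbot q)).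
  by rewrite (pmu_bot HA HE Hmin) // => e; rewrite /= (pmeetE o sim) (pbotE o sim); latE.
apply: (pmu_strict HA HE Hmin).
- exact: (qle_pt HA HE (hbot_le Hqh F)).
- by apply: Hle; apply: (hle_refl Hqh).
- exact: (qval_pt HA HE F).
- by rewrite val_eqE eq_sym.
Qed.

Lemma qm_measure : is_measure q i qm.
Proof.
split; [split; [|split; [|split]]|split].
- move=> x /existsP [F /andP [HF HxF]]; rewrite (qm_eq HF HxF).
  have [m [Hmin Hle]] := shape_le HF.
  apply: divr_ge0; apply: (pmu_ge0 HA HE Hmin); apply: Hle => //.
  exact: (hle_refl Hqh).
- move=> x y _ /existsP [F /andP [HF HyF]] Hxy.
  have HxF : hle q x F by apply: (hle_trans Hqh) Hxy HyF.
  rewrite (qm_eq HF HxF) (qm_eq HF HyF).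
  have [m [Hmin Hle]] := shape_le HF.
  apply: ler_wpM2r; first by rewrite invr_ge0; apply: ltW; apply: pm_min_pos.
  apply: (pmu_mono HA HE Hmin); last by apply: Hle.
  exact: (qle_pt HA HE Hxy).
- move=> a b d Ha Hb Hd.
  have Hj : hle q (hjoin q b d) a by apply: (hle_joinI Hqh).
  have Hmt : hle q (hmeet q b d) a by apply: (hmeet_leL Hqh).
  rewrite (qm_eq Ha Hj) (qm_eq Ha Hb) (qm_eq Ha Hd) (qm_eq Ha Hmt).
  have [m [Hmin Hle]] := shape_le Ha.
  have Ej : val (hjoin q b d) = hjoin po (val b) (val d).
    by apply: hmeet_eql; apply: (hle_joinI Hph); apply: qval_le.
  have Em : val (hmeet q b d) = hmeet po (val b) (val d).
    by apply: hmeet_eql; apply: (hmeet_leL Hph); apply: qval_le.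
  have := pmu_add HA HE Hmin (Hle _ Hb) (Hle _ Hd).
  rewrite -Ej -Em => H.
  have -> : pm (val (hjoin q b d)) = pm (val b) + pm (val d) - pm (val (hmeet q b d)) by lra.
  by rewrite mulrBl mulrDl.
- by move=> _; rewrite /upd_mu /qmu eqxx.
- move=> a b d Ha /andP [Hbd Hne] Hda.
  have Hba : hle q b a by apply: (hle_trans Hqh) Hbd Hda.
  rewrite (qm_eq Ha Hba) (qm_eq Ha Hda).
  have [m [Hmin Hle]] := shape_le Ha.
  rewrite ltr_pM2r; last by rewrite invr_gt0; apply: pm_min_pos.
  apply: (pmu_strict HA HE Hmin).
  + exact: (qle_pt HA HE Hbd).
  + by apply: Hle.
  + exact: (qval_pt HA HE d).
  + by rewrite val_eqE.
- move=> a Ha; rewrite (qm_eq Ha (hle_refl Hqh a)) divff //.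
  by apply: lt0r_neq0; apply: pm_min_pos.
Qed.
End Fin.

Lemma upd_APE : is_APE q (@upd_mu Ag R A o E sim P phi pre mu).
Proof. by split; [exact: Hqe | move=> i; apply: qm_measure]. Qed.

End Main.

Theorem proposition10 (Ag : Type) (R : realType) (A : finType) (o : hops Ag A)
  (mu : Ag -> A -> R) (E : finType) (sim : Ag -> rel E) (P : Ag -> E -> R)
  (phi : seq A) (pre : 'I_(size phi) -> E -> R) :
  is_APE o mu ->
  is_pes o sim P pre ->
  is_APE (upd_ops o sim pre) (@upd_mu Ag R A o E sim P phi pre mu).
Proof. by move=> HA HE; apply: upd_APE. Qed.
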